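(* Let $D$ be a Dirac operator for a finite complex spectral triple $(\mathcal A,\mathcal H,\pi,J,\gamma)$ and let $\Omega^1_D:=\mathrm{span}\{\pi(a)[D,\pi(b)]:a,b\in\mathcal A\}\subseteq B(\mathcal H)$. If $\omega\in\Omega^1_D$ satisfies $\pi(a)\omega=\omega\pi(a)$ for all $a\in\mathcal A$, then $\omega=0$.
   Context: Let $\mathcal A=\bigoplus_{i=1}^k M_{n_i}(\mathbb C)$ ($n_i\ge 1$), with involution $a\mapsto a^*$ given by blockwise conjugate transpose. A finite complex spectral triple over $\mathcal A$ consists of: a finite-dimensional complex Hilbert space $\mathcal H$; a faithful $*$-representation $\pi:\mathcal A\to B(\mathcal H)$; an antilinear isometry $J$ of $\mathcal H$ with $J^2=1$ such that $\pi^0(a):=J\pi(a)^*J$ defines a representation of the opposite algebra $\mathcal A^0$ and $[\pi^0(a),\pi(b)]=0$ for all $a,b\in\mathcal A$; and a grading $\gamma\in B(\mathcal H)$ with $\gamma^*=\gamma$, $\gamma^2=1$, $J\gamma=\gamma J$, $\gamma\pi(a)=\pi(a)\gamma$ for all $a$, and $\gamma=\sum_m\pi(x_m)\pi^0(y_m)$ for finitely many $x_m,y_m\in\mathcal A$. A Dirac operator is a self-adjoint $D\in B(\mathcal H)$ with $DJ=JD$, $D\gamma=-\gamma D$ and $[[D,\pi(a)],\pi^0(b)]=0$ for all $a,b\in\mathcal A$. The space $\Omega^1_D$ is (isomorphic to) the first-order differential calculus $\Omega^1(\mathcal A)$ of the spectral triple, an $\mathcal A$-bimodule via left and right multiplication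 by $\pi(\mathcal A)$. *)

(* Defs.v *)
From mathcomp Require Import all_boot all_algebra.
From mathcomp Require Import reals complex.
Set Implicit Arguments. Unset Strict Implicit. Unset Printing Implicit Defensive.
Import GRing.Theory Num.Theory.
Local Open Scope ring_scope.

Definition adjmx (R : realType) (m p : nat) (M : 'M[R[i]]_(m, p)) : 'M[R[i]]_(p, m) :=
  (map_mx Num.conj M)^T.

(* The algebra  A = (+)_{i<k} M_{n_i}(C): elements are families of matrices,
   operations are blockwise. *)
Definition algA (R : realType) (k : nat) (n : 'I_k -> nat) : Type :=
  forall i : 'I_k, 'M[R[i]]_(n i).
Arguments algA R {k} n.

Definition addA (R : realType) (k : nat) (n : 'I_k -> nat) (a b : algA R n) : algA R n := fun i => a i + b i.
Definition mulA (R : realType) (k : nat) (n : 'I_k -> nat) (a b : algA R n) : algA R n := fun i => a i *m b i.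
Definition scaleA (R : realType) (k : nat) (n : 'I_k -> nat) (c : R[i]) (a : algA R n) : algA R n := fun i => c *: a i.
Definition starA (R : realType) (k : nat) (n : 'I_k -> nat) (a : algA R n) : algA R n := fun i => adjmx (a i).

(* The Hilbert space  H = C^N  (column vectors); B(H) = 'M_N acting on the left.
   J is an arbitrary (set-theoretic) map  C^N -> C^N.  For an operator T,
   conjJ J T  is the map  v |-> J (T (J v)).  *)
Definition conjJ (R : realType) N (J : 'cV[R[i]]_N -> 'cV[R[i]]_N) (T : 'M[R[i]]_N)
  : 'cV[R[i]]_N -> 'cV[R[i]]_N := fun v => J (T *m J v).

(* pi^0(a) := J pi(a)^* J, as a map on H *)
Definition piop (R : realType) (k : nat) (n : 'I_k -> nat) N (pi : algA R n -> 'M[R[i]]_N)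
  (J : 'cV[R[i]]_N -> 'cV[R[i]]_N) (a : algA R n) : 'cV[R[i]]_N -> 'cV[R[i]]_N :=
  conjJ J (adjmx (pi a)).

Definition is_faithful_star_rep (R : realType) (k : nat) (n : 'I_k -> nat) N (pi : algA R n -> 'M[R[i]]_N) : Prop :=
  [/\ forall a b, pi (addA a b) = pi a + pi b,
      forall c a, pi (scaleA c a) = c *: pi a,
      forall a b, pi (mulA a b) = pi a *m pi b,
      forall a, pi (starA a) = adjmx (pi a)
    & injective pi].

Definition is_real_structure (R : realType) N (J : 'cV[R[i]]_N -> 'cV[R[i]]_N) : Prop :=
  [/\ forall x y, J (x + y) = J x + J y,
      forall (c : R[i]) x, J (c *: x) = c^* *: J x,
      forall x, adjmx (J x) *m J x = adjmx x *m x
    & forall x, J (J x) = x].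

Definition is_finite_spectral_triple (R : realType) (k : nat) (n : 'I_k -> nat) N (pi : algA R n -> 'M[R[i]]_N)
  (J : 'cV[R[i]]_N -> 'cV[R[i]]_N) (gamma : 'M[R[i]]_N) : Prop :=
  [/\ is_faithful_star_rep pi,
      is_real_structure J,
      (* pi^0 is a representation of the opposite algebra A^0 *)
      [/\ forall a b v, piop pi J (addA a b) v = piop pi J a v + piop pi J b v,
          forall c a v, piop pi J (scaleA c a) v = c *: piop pi J a v
        & forall a b v, piop pi J (mulA a b) v = piop pi J b (piop pi J a v)],
      (* order zero condition [pi^0(a), pi(b)] = 0 *)
      forall a b v, piop pi J a (pi b *m v) = pi b *m piop pi J a v &
      [/\ adjmx gamma = gamma, gamma *m gamma = 1%:M,
          forall v, J (gamma *m v) = gamma *m J v,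
          forall a, gamma *m pi a = pi a *m gamma
        & exists (m : nat) (x y : 'I_m -> algA R n),
            forall v, gamma *m v = \sum_(j < m) pi (x j) *m piop pi J (y j) v]].

Definition is_Dirac (R : realType) (k : nat) (n : 'I_k -> nat) N (pi : algA R n -> 'M[R[i]]_N)
  (J : 'cV[R[i]]_N -> 'cV[R[i]]_N) (gamma D : 'M[R[i]]_N) : Prop :=
  [/\ adjmx D = D,
      forall v, D *m J v = J (D *m v),
      D *m gamma = - (gamma *m D)
    & (* first-order condition [[D, pi(a)], pi^0(b)] = 0 *)
      forall a b v,
        (D *m pi a - pi a *m D) *m piop pi J b v
        = piop pi J b ((D *m pi a - pi a *m D) *m v)].

Definition in_Omega1 (R : realType) (k : nat) (n : 'I_k -> nat) N (pi : algA R n -> 'M[R[i]]_N) (D : 'M[R[i]]_N)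
  (w : 'M[R[i]]_N) : Prop :=
  exists (m : nat) (c : 'I_m -> R[i]) (a b : 'I_m -> algA R n),
    w = \sum_(j < m) c j *: (pi (a j) *m (D *m pi (b j) - pi (b j) *m D)).

(* Main.v *)
Require Import Defs.
From mathcomp Require Import all_boot all_algebra.
From mathcomp Require Import reals complex.
Import GRing.Theory Num.Theory.
Local Open Scope ring_scope.

Theorem mainTheorem9 (R : realType) (k : nat) (n : 'I_k -> nat)
  (Hn : forall i, (0 < n i)%N) (N : nat)
  (pi : algA R n -> 'M[R[i]]_N) (J : 'cV[R[i]]_N -> 'cV[R[i]]_N)
  (gamma D : 'M[R[i]]_N)
  (HST : is_finite_spectral_triple pi J gamma)
  (HD : is_Dirac pi J gamma D)
  (w : 'M[R[i]]_N) (Hw : in_Omega1 pi D w)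
  (Hcomm : forall a : algA R n, pi a *m w = w *m pi a) :
  w = 0.
Proof.
case: HST => Hrep [Jadd Jsc Jiso JJ] _ Hord [gadj gg gJ gpi [m [x [y Hg]]]].
case: HD => Dadj DJ Dg Hfirst.
have padd : forall b u v, piop pi J b (u + v) = piop pi J b u + piop pi J b v.
  by move=> b u v; rewrite /piop /conjJ Jadd mulmxDr Jadd.
have psc : forall b (c : R[i]) v, piop pi J b (c *: v) = c *: piop pi J b v.
  by move=> b c v; rewrite /piop /conjJ Jsc -scalemxAr Jsc conjCK.
have p0 : forall b, piop pi J b 0 = 0.
  by move=> b; apply: (addrI (piop pi J b 0)); rewrite -padd !addr0.
have psum : forall b (I : Type) (r : seq I) (f : I -> 'cV[R[i]]_N),
    piop pi J b (\sum_(j <- r) f j) = \sum_(j <- r) piop pi J b (f j).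
  by move=> b I r f; apply: (big_morph _ (padd b) (p0 b)).
case: Hw => m' [c [a [b Hweq]]].
have Hwp : forall b0 v, w *m piop pi J b0 v = piop pi J b0 (w *m v).
  move=> b0 v; rewrite Hweq !mulmx_suml psum; apply: eq_bigr => j _.
  rewrite -!scalemxAl psc -!mulmxA Hfirst; congr (_ *: _).
  by rewrite Hord.
have Hwg : forall v : 'cV[R[i]]_N, w *m (gamma *m v) = gamma *m (w *m v).
  move=> v; rewrite Hg (Hg (w *m v)) mulmx_sumr; apply: eq_bigr => j _.
  by rewrite mulmxA -Hcomm -mulmxA Hwp.
have Hga : gamma *m w = - (w *m gamma).
  rewrite Hweq mulmx_suml mulmx_sumr -sumrN; apply: eq_bigr => j _.
  rewrite -scalemxAr -scalemxAl -scalerN; congr (_ *: _).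
  rewrite !mulmxA gpi -!mulmxA; rewrite -[RHS]mulmxN; congr (_ *m _).
  have gD : gamma *m D = - (D *m gamma) by rewrite Dg opprK.
  have h1 : gamma *m (D *m pi (b j)) = - (D *m pi (b j) *m gamma).
    by rewrite mulmxA gD mulNmx -(mulmxA D gamma) gpi mulmxA.
  have h2 : gamma *m (pi (b j) *m D) = - (pi (b j) *m D *m gamma).
    by rewrite mulmxA gpi -(mulmxA (pi (b j))) gD mulmxN mulmxA.
  by rewrite mulmxBr h1 h2 mulmxBl opprD.
have H0 : forall v : 'cV[R[i]]_N, w *m (gamma *m v) = 0.
  move=> v; have := Hwg v; rewrite (mulmxA gamma) Hga mulNmx -mulmxA => /eqP.
  rewrite -subr_eq0 opprK -mulr2n -scaler_nat scaler_eq0 => /orP[|/eqP->] //.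
  by rewrite pnatr_eq0.
have H1 : forall v : 'cV[R[i]]_N, w *m v = 0.
  by move=> v; rewrite -(mul1mx v) -gg -mulmxA H0.
apply/matrixP => i j; have := H1 (delta_mx j 0); rewrite -colE => /matrixP/(_ i 0).
by rewrite !mxE.
Qed.
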